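(* Let $\alpha_1,\ldots,\alpha_n\in\mathbb{R}^n$ be linearly independent unit vectors, let $Q=\{y\in\mathbb{R}^n:(y,\alpha_i)\geqslant0 \text{ for all } i\}$ with walls $B_i=\{y\in Q:(y,\alpha_i)=0\}$, and let $d>0$ and the unit vector $\mathbf{e}\in\mathbb{R}^n$ be determined by $(\mathbf{e},\alpha_i)=d$ for all $i=1,\ldots,n$ (equivalently, $d$ is the distance from the origin to the affine hyperplane through the points $\alpha_1,\ldots,\alpha_n$ and $\mathbf{e}$ its unit normal pointing away from the origin). Consider a billiard trajectory in $Q$ with unit speed that has undergone $N$ reflections at the walls, and let $\mathbf{v}_0,\mathbf{v}_1,\ldots,\mathbf{v}_N$ (points on the unit sphere) be its successive velocities. Then the length $L$ of the polygonal line through $\mathbf{v}_0,\ldots,\mathbf{v}_N$ satisfies $$L=\sum_{k=0}^{N-1}\|\mathbf{v}_{k+1}-\mathbf{v}_k\|\leqslant\frac{2}{d}.$$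
   Context: A billiard trajectory in $Q$: a point particle moves with uniform motion in the interior of $Q$ and undergoes specular reflections at the walls $B_i$, i.e. upon hitting $B_i$ its velocity $v$ is replaced by $v-2(v,\alpha_i)\alpha_i$; motion is not defined after reaching a corner $B_i\cap B_j$, $i\ne j$. *)

(* Defs.v *)
From HB Require Import structures.
From mathcomp Require Import all_boot all_order all_algebra.
From mathcomp Require Import reals.
Set Implicit Arguments. Unset Strict Implicit. Unset Printing Implicit Defensive.
Import Order.TTheory GRing.Theory Num.Theory.
Local Open Scope ring_scope.

Definition dot (R : realType) (n : nat) (u v : 'rV[R]_n) : R :=
  \sum_(i < n) u ord0 i * v ord0 i.

Definition enorm (R : realType) (n : nat) (u : 'rV[R]_n) : R :=
  Num.sqrt (dot u u).

Definition inQ (R : realType) (n : nat) (alpha : 'I_n -> 'rV[R]_n) (y : 'rV[R]_n) :=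
  forall j, 0 <= dot y (alpha j).

Definition inQint (R : realType) (n : nat) (alpha : 'I_n -> 'rV[R]_n) (y : 'rV[R]_n) :=
  forall j, 0 < dot y (alpha j).

Definition reflect_at (R : realType) (n : nat) (a v : 'rV[R]_n) : 'rV[R]_n :=
  v - (2 * dot v a) *: a.

(* A unit-speed billiard trajectory in Q with N reflections.
   y 0 is the starting point, y (k+1) (k < N) is the point of the (k+1)-th
   reflection, on wall B_(w k) and on no other wall (no corner);
   v k is the velocity on the k-th free segment (from y k to y (k+1)), the
   segment being traversed in time t k > 0 through the interior of Q;
   v (k+1) is obtained from v k by reflection at wall w k. *)
Definition billiard_traj (R : realType) (n : nat) (alpha : 'I_n -> 'rV[R]_n)
    (N : nat) (y v : nat -> 'rV[R]_n) (t : nat -> R) (w : nat -> 'I_n) : Prop :=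
  [/\ inQ alpha (y 0%N), dot (v 0%N) (v 0%N) = 1 &
  forall k, (k < N)%N ->
    [/\ 0 < t k,
        y k.+1 = y k + t k *: v k,
        (forall s, 0 < s -> s < t k -> inQint alpha (y k + s *: v k)),
        [/\ dot (y k.+1) (alpha (w k)) = 0
           & forall j, j != w k -> 0 < dot (y k.+1) (alpha j)] &
        v k.+1 = reflect_at (alpha (w k)) (v k)]].

(* Main.v *)
Require Import Defs.
From HB Require Import structures.
From mathcomp Require Import all_boot all_order all_algebra.
From mathcomp Require Import reals.
From mathcomp Require Import ring lra.
Import Order.TTheory GRing.Theory Num.Theory.
Local Open Scope ring_scope.

Section Dot.
Variables (R : realType) (n : nat).
Implicit Types (u v w : 'rV[R]_n).

Lemma dotC u v : dot u v = dot v u.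
Proof. by apply: eq_bigr => i _; rewrite mulrC. Qed.

Lemma dotDl u w v : dot (u + w) v = dot u v + dot w v.
Proof. rewrite /dot -big_split; apply: eq_bigr => i _; by rewrite !mxE mulrDl. Qed.

Lemma dotZl a u v : dot (a *: u) v = a * dot u v.
Proof. rewrite /dot mulr_sumr; apply: eq_bigr => i _; by rewrite !mxE mulrA. Qed.

Lemma dotNl u v : dot (- u) v = - dot u v.
Proof. by rewrite -scaleN1r dotZl mulN1r. Qed.

Lemma dotBl u w v : dot (u - w) v = dot u v - dot w v.
Proof. by rewrite dotDl dotNl. Qed.

Lemma dotDr u w v : dot v (u + w) = dot v u + dot v w.
Proof. by rewrite dotC dotDl !(dotC v). Qed.

Lemma dotZr a u v : dot v (a *: u) = a * dot v u.
Proof. by rewrite dotC dotZl dotC. Qed.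

Lemma dotBr u w v : dot v (u - w) = dot v u - dot v w.
Proof. by rewrite dotC dotBl !(dotC v). Qed.

Lemma dot_ge0 u : 0 <= dot u u.
Proof. apply: sumr_ge0 => i _; by rewrite -expr2 sqr_ge0. Qed.
End Dot.
Arguments dotC {R n}. Arguments dotDl {R n}. Arguments dotZl {R n}. Arguments dotNl {R n}. Arguments dotBl {R n}. Arguments dotDr {R n}. Arguments dotZr {R n}. Arguments dotBr {R n}. Arguments dot_ge0 {R n}.

Theorem lemma1 (R : realType) (n : nat) (alpha : 'I_n -> 'rV[R]_n)
    (e : 'rV[R]_n) (d : R)
    (Hunit : forall i, dot (alpha i) (alpha i) = 1)
    (Hfree : row_free (\matrix_(i < n) alpha i))
    (He : dot e e = 1) (Hd : 0 < d)
    (Hed : forall i, dot e (alpha i) = d)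
    (N : nat) (y v : nat -> 'rV[R]_n) (t : nat -> R) (w : nat -> 'I_n)
    (Htraj : billiard_traj alpha N y v t w) :
  \sum_(k < N) enorm (v k.+1 - v k) <= 2 / d.
Proof.
case: Htraj => _ Hv0 Hk.
have Hneg : forall k, (k < N)%N -> dot (v k) (alpha (w k)) < 0.
  move=> k /Hk [tp Hy Hint [H0 _] _].
  have h1 : 0 < t k / 2 by rewrite divr_gt0.
  have h2 : t k / 2 < t k by rewrite ltr_pdivrMr // ltr_pMr // ltr1n.
  have := Hint (t k / 2) h1 h2.
  move/(_ (w k)); move: H0; rewrite Hy !dotDl !dotZl => H0 H1.
  have : t k / 2 * dot (v k) (alpha (w k)) < 0 by nra.
  by rewrite pmulr_rlt0 // divr_gt0.
have Hstep : forall k, (k < N)%N ->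
    v k.+1 = v k - (2 * dot (v k) (alpha (w k))) *: alpha (w k).
  by move=> k /Hk [_ _ _ _ ->].
have Hnorm : forall k, (k <= N)%N -> dot (v k) (v k) = 1.
  elim=> [//|k IH] Hk1.
  have Hk1' : (k < N)%N by [].
  rewrite Hstep // dotBl !dotBr !dotZl !dotZr Hunit (dotC (alpha _)) IH; last exact: ltnW.
  ring.
have Hterm : forall k, (k < N)%N ->
    enorm (v k.+1 - v k) = (dot (v k.+1) e - dot (v k) e) / d.
  move=> k kN.
  have hc := Hneg k kN.
  set c := dot (v k) (alpha (w k)) in hc.
  have -> : v k.+1 - v k = (- (2*c)) *: alpha (w k).
    by rewrite Hstep // addrAC subrr add0r scaleNr.
  rewrite /enorm dotZl dotZr Hunit mulr1 -expr2 sqrtr_sqr.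
  rewrite Hstep // dotBl dotZl (dotC (alpha _)) Hed ger0_norm; last by lra.
  rewrite -/c; field; exact: lt0r_neq0.
have HvN := Hnorm N (leqnn N).
have h1 := dot_ge0 (v N - e).
have h2 := dot_ge0 (v 0%N + e).
rewrite !dotBl !dotBr !dotDl !dotDr He HvN Hv0 (dotC e) (dotC e) in h1 h2.
rewrite (eq_bigr (fun k : 'I_N => (dot (v k.+1) e - dot (v k) e) / d)); last first.
  by move=> k _; apply: Hterm.
rewrite -mulr_suml.
rewrite -(big_mkord xpredT (fun k => dot (v k.+1) e - dot (v k) e)) telescope_sumr //.
rewrite ler_pM2r ?invr_gt0 //; lra.
Qed.
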